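(* Let $k$ be a field containing all $m$-th roots of unity, with $p\nmid m$ if $\operatorname{char}(k)=p>0$. Let $\mathcal A$ be a perfect $k$-algebra, $S$ a commutative associative unital $k$-algebra, $\sigma_1\in\operatorname{Aut}(\mathcal A)$, $\sigma_2\in\operatorname{Aut}(S)$ with $\sigma_1^m=\mathrm{id}$, $\sigma_2^m=\mathrm{id}$; assume $S_{\bar 1}$ contains an invertible element $u$ of $S$, and that $\psi:C(\mathcal A)\otimes S\to C(\mathcal A\otimes S)$, $\gamma\otimes s\mapsto\gamma\otimes L_s$, is an isomorphism. Then the restriction map $\pi:\mathcal D(\mathcal A\otimes S)_{\bar 0}\to\mathcal D((\mathcal A\otimes S)_{\bar 0})$, $D\mapsto D|_{(\mathcal A\otimes S)_{\bar 0}}$, is surjective.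
   Context: Algebras are $k$-vector spaces with bilinear product (not necessarily associative); perfect means $\mathcal A\mathcal A=\mathcal A$; $C(\mathcal A)$ is the centroid $\{\gamma\in\operatorname{End}(\mathcal A)\mid\gamma(xy)=\gamma(x)y=x\gamma(y)\}$; $\mathcal D$ denotes derivations; $L_s$ is left multiplication. Fix a primitive $m$-th root of unity $\omega$; $\mathcal A_{\bar i}=\{a\mid\sigma_1(a)=\omega^ia\}$, $S_{\bar i}=\{s\mid\sigma_2(s)=\omega^is\}$, $(\mathcal A\otimes S)_{\bar i}=\sum_{\bar j}\mathcal A_{\bar i-\bar j}\otimes S_{\bar j}$; $(\mathcal A\otimes S)_{\bar 0}$ is the fixed-point subalgebra of $\sigma_1\otimes\sigma_2$; $\mathcal D(\mathcal A\otimes S)_{\bar 0}$ is the set of derivations of $\mathcal A\otimes S$ mapping each $(\mathcal A\otimes S)_{\bar j}$ into itself. *)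

(* Defs.v *)
From HB Require Import structures.
From mathcomp Require Import all_boot all_order all_algebra.
Set Implicit Arguments. Unset Strict Implicit. Unset Printing Implicit Defensive.
Import GRing.Theory.
Local Open Scope ring_scope.

Section Defs.
Variable k : fieldType.

Definition klinear (U V : lmodType k) (f : U -> V) : Prop :=
  forall (a : k) (x y : U), f (a *: x + y) = a *: f x + f y.

Definition kbilinear (U V W : lmodType k) (f : U -> V -> W) : Prop :=
  (forall v : V, klinear (fun u => f u v)) /\ (forall u : U, klinear (f u)).

Definition is_tensor_product (U V T : lmodType k) (t : U -> V -> T) : Prop :=
  kbilinear t /\
  forall (W : lmodType k) (f : U -> V -> W), kbilinear f ->
    (exists g : T -> W, klinear g /\ forall u v, g (t u v) = f u v) /\
    (forall g1 g2 : T -> W, klinear g1 -> klinear g2 ->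
       (forall u v, g1 (t u v) = f u v) -> (forall u v, g2 (t u v) = f u v) ->
       g1 =1 g2).

Definition in_span (T : lmodType k) (P : T -> Prop) (x : T) : Prop :=
  exists n (c : 'I_n -> k) (v : 'I_n -> T),
    (forall i, P (v i)) /\ x = \sum_(i < n) c i *: v i.

Definition perfect (A : lmodType k) (mul : A -> A -> A) : Prop :=
  forall a : A, in_span (fun z => exists x y, z = mul x y) a.

Definition is_derivation (A : lmodType k) (mul : A -> A -> A) (D : A -> A) :=
  klinear D /\ forall x y, D (mul x y) = mul (D x) y + mul x (D y).

Definition in_centroid (A : lmodType k) (mul : A -> A -> A) (g : A -> A) :=
  klinear g /\ forall x y, g (mul x y) = mul (g x) y /\ g (mul x y) = mul x (g y).

Definition is_alg_aut (A : lmodType k) (mul : A -> A -> A) (s : A -> A) :=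
  klinear s /\ bijective s /\ forall x y, s (mul x y) = mul (s x) (s y).

Definition eigen (A : lmodType k) (s : A -> A) (al : k) (a : A) : Prop :=
  s a = al *: a.

(* the graded piece (A (x) S)_{i} = sum_j A_{i-j} (x) S_j, indices mod m *)
Definition tens_piece (m : nat) (w : k) (A S T : lmodType k) (t : A -> S -> T)
  (s1 : A -> A) (s2 : S -> S) (i : nat) (x : T) : Prop :=
  in_span (fun y => exists (j : 'I_m) (a : A) (s : S),
     eigen s1 (w ^+ (i + (m - j))) a /\ eigen s2 (w ^+ j) s /\ y = t a s) x.

End Defs.

(* Main.v *)
Require Import Defs.
From HB Require Import structures.
From mathcomp Require Import all_boot all_order all_algebra.
From mathcomp Require Import zify ring.
Import GRing.Theory.
Local Open Scope ring_scope.

Module Aux.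
Set Implicit Arguments. Unset Strict Implicit. Unset Printing Implicit Defensive.

Section Gen.
Variable k : fieldType.

Lemma kl0 (V W : lmodType k) (f : V -> W) : klinear f -> f 0 = 0.
Proof.
move=> hf; have := hf 1 0 0; rewrite scale1r addr0 scale1r => H.
by apply: (addrI (f 0)); rewrite addr0 -H.
Qed.

Lemma klD (V W : lmodType k) (f : V -> W) : klinear f -> forall x y, f (x + y) = f x + f y.
Proof. by move=> hf x y; have := hf 1 x y; rewrite !scale1r. Qed.

Lemma klZ (V W : lmodType k) (f : V -> W) : klinear f -> forall a x, f (a *: x) = a *: f x.
Proof. by move=> hf a x; have := hf a x 0; rewrite !addr0 (kl0 hf) addr0. Qed.

Lemma kl_sum (V W : lmodType k) (f : V -> W) : klinear f ->
  forall n (F : 'I_n -> V), f (\sum_(i < n) F i) = \sum_(i < n) f (F i).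
Proof.
move=> hf; elim=> [|n IH] F; first by rewrite !big_ord0 (kl0 hf).
by rewrite !big_ord_recr /= (klD hf) IH.
Qed.

Lemma kl_comp (U V W : lmodType k) (f : V -> W) (g : U -> V) :
  klinear f -> klinear g -> klinear (fun x => f (g x)).
Proof. by move=> hf hg a x y; rewrite hg hf. Qed.

Lemma kl_add (V W : lmodType k) (f g : V -> W) :
  klinear f -> klinear g -> klinear (fun x => f x + g x).
Proof.
move=> hf hg a x y; rewrite hf hg scalerDr.
by rewrite -!addrA; congr (_ + _); rewrite addrCA.
Qed.

Lemma kl_id (V : lmodType k) : klinear (fun x : V => x).
Proof. by []. Qed.

Section Span.
Variables (V : lmodType k) (P : V -> Prop).

Lemma span_gen x : P x -> in_span P x.
Proof.
move=> Px; exists 1%N, (fun _ => 1), (fun _ => x); split => //.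
by rewrite big_ord1 scale1r.
Qed.

Lemma span0 : in_span P 0.
Proof.
exists 0%N, (fun _ => 0), (fun _ => 0); split; first by case.
by rewrite big_ord0.
Qed.

Lemma spanZ a x : in_span P x -> in_span P (a *: x).
Proof.
case=> n [c [v [Pv ->]]]; exists n, (fun i => a * c i), v; split => //.
by rewrite scaler_sumr; apply: eq_bigr => i _; rewrite scalerA.
Qed.

Lemma spanD x y : in_span P x -> in_span P y -> in_span P (x + y).
Proof.
case=> n1 [c1 [v1 [Pv1 ->]]]; case=> n2 [c2 [v2 [Pv2 ->]]].
exists (n1 + n2)%N, (fun i => match split i with inl j => c1 j | inr j => c2 j end),
  (fun i => match split i with inl j => v1 j | inr j => v2 j end); split.
  by move=> i; case: (split i).
rewrite big_split_ord /=; congr (_ + _); apply: eq_bigr => i _.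
  by have -> : split (lshift n2 i) = inl i by rewrite -[lshift _ _]/(unsplit (inl i)) unsplitK.
by have -> : split (rshift n1 i) = inr i by rewrite -[rshift _ _]/(unsplit (inr i)) unsplitK.
Qed.

Lemma span_sum n (F : 'I_n -> V) : (forall i, in_span P (F i)) -> in_span P (\sum_(i < n) F i).
Proof.
elim: n F => [|n IH] F hF; first by rewrite big_ord0; exact: span0.
by rewrite big_ord_recr; apply: spanD => //; apply: IH.
Qed.

Lemma span_mono (Q : V -> Prop) : (forall x, P x -> Q x) -> forall x, in_span P x -> in_span Q x.
Proof. by move=> PQ x [n [c [v [Pv ->]]]]; exists n, c, v; split => // i; apply: PQ. Qed.

End Span.
Section Span2.
Variables (V : lmodType k) (P : V -> Prop).
Variable W : lmodType k.
Variable f : V -> W.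
Hypothesis hf : forall a x y, in_span P x -> in_span P y -> f (a *: x + y) = a *: f x + f y.

Lemma lin_span0 : f 0 = 0.
Proof.
have := hf 1 (span0 P) (span0 P); rewrite scale1r addr0 scale1r => H.
by apply: (addrI (f 0)); rewrite addr0 -H.
Qed.

Lemma lin_span n (c : 'I_n -> k) (v : 'I_n -> V) : (forall i, P (v i)) ->
  f (\sum_(i < n) c i *: v i) = \sum_(i < n) c i *: f (v i).
Proof.
elim: n c v => [|n IH] c v Pv; first by rewrite !big_ord0 lin_span0.
rewrite !big_ord_recr /= [X in f X]addrC [RHS]addrC hf ?IH //; first exact: span_gen.

by exists n, (fun i => c (widen_ord (leqnSn n) i)), (fun i => v (widen_ord (leqnSn n) i)).
Qed.

Lemma map_span (Q : W -> Prop) : (forall x, P x -> in_span Q (f x)) ->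
  forall x, in_span P x -> in_span Q (f x).
Proof.
move=> PQ x [n [c [v [Pv ->]]]]; rewrite lin_span //.
by apply: span_sum => i; apply: spanZ; apply: PQ.
Qed.
End Span2.

Lemma kl_span (V W : lmodType k) (P : V -> Prop) (f : V -> W) : klinear f ->
  forall a x y, in_span P x -> in_span P y -> f (a *: x + y) = a *: f x + f y.
Proof. by move=> hf a x y _ _; apply: hf. Qed.

Section Tensor.
Variables (A S T : lmodType k) (t : A -> S -> T).
Hypothesis ht : is_tensor_product t.

Lemma tens_ext (g1 g2 : T -> T) : klinear g1 -> klinear g2 ->
  (forall a s, g1 (t a s) = g2 (t a s)) -> g1 =1 g2.
Proof.
move=> h1 h2 H; case: ht => [[tl tr] hU].
have fb : kbilinear (fun a s => g1 (t a s)).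
  by split => [v|u0] a x y /=; rewrite ?tl ?tr h1.
case: (hU T _ fb) => _ U2; apply: U2 => // a s; exact: esym.
Qed.

Lemma tens_lift (f : A -> S -> T) : kbilinear f ->
  exists g : T -> T, klinear g /\ forall a s, g (t a s) = f a s.
Proof. by move=> fb; case: ht => _ hU; case: (hU T f fb). Qed.
End Tensor.

End Gen.

Section Prim.
Variables (k : fieldType) (m : nat) (w : k).
Hypothesis hw : m.-primitive_root w.

Lemma m_gt0 : (0 < m)%N.
Proof. exact: prim_order_gt0 hw. Qed.

Lemma wm : w ^+ m = 1.
Proof. exact: prim_expr_order hw. Qed.

Lemma mR_neq0 : (m%:R : k) != 0.
Proof. by rewrite natf_neq0_pchar; exact: pchar_prim_root hw. Qed.

Lemma w_neq0 : w != 0.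
Proof.
apply/eqP => w0; have := wm; rewrite w0 expr0n.
by case: m m_gt0 => // n _ /eqP; rewrite eq_sym oner_eq0.
Qed.

Lemma wexpM a l : w ^+ (a + l * m) = w ^+ a.
Proof. by rewrite exprD mulnC exprM wm expr1n mulr1. Qed.

Lemma wE a b l1 l2 : (a + l1 * m = b + l2 * m)%N -> w ^+ a = w ^+ b.
Proof. by move=> H; rewrite -(wexpM a l1) H wexpM. Qed.

Lemma wmod a : w ^+ (a %% m)%N = w ^+ a.
Proof. by rewrite (prim_expr_mod hw). Qed.

Lemma geo (z : k) : z ^+ m = 1 -> \sum_(l < m) z ^+ l = if z == 1 then m%:R else 0.
Proof.
move=> zm; case: eqP => [->|/eqP z1].
  by rewrite (eq_bigr (fun _ => 1)) => [|i _]; rewrite ?expr1n // sumr_const card_ord.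
have := subrX1 z m; rewrite zm subrr => /esym /eqP; rewrite mulf_eq0 subr_eq0 (negbTE z1) /=.
by move/eqP.
Qed.

Section Proj.
Variables (V : lmodType k) (sg : V -> V).
Hypothesis hsg : klinear sg.
Hypothesis hsgm : forall x, iter m sg x = x.

Definition proj (p : nat) (x : V) : V :=
  (m%:R)^-1 *: \sum_(l < m) ((w ^+ p)^-1 ^+ l) *: iter l sg x.

Lemma iter_lin l : klinear (iter l sg).
Proof. elim: l => [|l IH] // a x y; rewrite !iterS IH; exact: hsg. Qed.

Lemma proj_lin p : klinear (proj p).
Proof.
move=> a x y; rewrite /proj.
have -> : \sum_(l < m) (w ^+ p)^-1 ^+ l *: iter l sg (a *: x + y) =
  a *: \sum_(l < m) (w ^+ p)^-1 ^+ l *: iter l sg x + \sum_(l < m) (w ^+ p)^-1 ^+ l *: iter l sg y.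
  rewrite scaler_sumr -big_split; apply: eq_bigr => l _.
  by rewrite iter_lin scalerDr !scalerA mulrC.
by rewrite scalerDr !scalerA mulrC.
Qed.

Lemma cyc (F : nat -> V) : F m = F 0 -> \sum_(l < m) F l.+1 = \sum_(l < m) F l.
Proof.
move: m_gt0; case: m => // n _ H.
by rewrite big_ord_recr big_ord_recl /= H addrC.
Qed.

Lemma proj_eigen p x : eigen sg (w ^+ p) (proj p x).
Proof.
rewrite /eigen /proj (klZ hsg) (kl_sum hsg).
set c := (w ^+ p)^-1.
have hc : c ^+ m = 1 by rewrite /c exprVn -exprM mulnC exprM wm expr1n invr1.
have cw : w ^+ p * c = 1 by rewrite /c mulfV // expf_neq0 // w_neq0.
have E : forall l : 'I_m, sg (c ^+ l *: iter l sg x) = w ^+ p *: (c ^+ l.+1 *: iter l.+1 sg x).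
  by move=> l; rewrite (klZ hsg) scalerA exprS mulrA cw mul1r.
rewrite (eq_bigr _ (fun l _ => E l)) -scaler_sumr.
rewrite (@cyc (fun l => c ^+ l *: iter l sg x)); first by rewrite !scalerA mulrC.
by rewrite hc hsgm expr0.
Qed.

Lemma proj_sum x : \sum_(p < m) proj p x = x.
Proof.
rewrite /proj -scaler_sumr exchange_big /=.
have E : forall l : 'I_m, \sum_(p < m) (w ^+ p)^-1 ^+ l *: iter l sg x =
   (if (l == 0 :> nat) then m%:R else 0) *: iter l sg x.
  move=> l; rewrite -scaler_suml.
  have -> : \sum_(p < m) (w ^+ p)^-1 ^+ l = \sum_(p < m) ((w ^+ l)^-1) ^+ p.
    by apply: eq_bigr => p _; rewrite !exprVn -!exprM mulnC.
  rewrite geo; last by rewrite exprVn -exprM mulnC exprM wm expr1n invr1.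
  congr (_ *: _); rewrite invr_eq1 -(expr0 w) (eq_prim_root_expr hw) mod0n modn_small //.
rewrite (eq_bigr _ (fun l _ => E l)) (bigD1 (Ordinal m_gt0)) //= big1 => [|l /negbTE H].
  by rewrite addr0 /= scalerA mulVf ?mR_neq0 // scale1r.
have -> : (l == 0 :> nat) = false.
  by apply/negbTE; apply: contraFN H => /eqP l0; apply/eqP; apply: val_inj.
by rewrite scale0r.
Qed.

Lemma iter_eigen (al : k) x l : eigen sg al x -> iter l sg x = al ^+ l *: x.
Proof.
move=> hx; elim: l => [|l IH]; first by rewrite scale1r.
by rewrite iterS IH (klZ hsg) hx scalerA exprSr.
Qed.

Lemma proj_collapse n x p : eigen sg (w ^+ n) x -> (p < m)%N ->
  proj p x = if (n %% m == p)%N then x else 0.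
Proof.
move=> hx pm; rewrite /proj.
have -> : \sum_(l < m) (w ^+ p)^-1 ^+ l *: iter l sg x =
          (\sum_(l < m) (w ^+ n / w ^+ p) ^+ l) *: x.
  rewrite scaler_suml; apply: eq_bigr => l _.
  by rewrite (iter_eigen _ hx) scalerA -exprMn mulrC.
rewrite geo; last by rewrite exprMn exprVn -!exprM !(mulnC _ m) !exprM wm !expr1n invr1 mulr1.
have wp0 : w ^+ p != 0 by rewrite expf_neq0 // w_neq0.
have -> : (w ^+ n / w ^+ p == 1) = (n %% m == p)%N.
  have -> : (n %% m == p)%N = (w ^+ n == w ^+ p) by rewrite (eq_prim_root_expr hw) (modn_small pm).
  apply/eqP/eqP => [H|->]; last by rewrite mulfV.
  by rewrite -(mulfVK wp0 (w ^+ n)) H mul1r.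
case: ifP => _; last by rewrite scale0r scaler0.
by rewrite scalerA mulVf ?mR_neq0 // scale1r.
Qed.

End Proj.
End Prim.

Section Main.
Variables (k : fieldType) (m : nat) (w : k).
Hypothesis hw : m.-primitive_root w.
Variables (A : lmodType k) (mulA : A -> A -> A).
Hypothesis hmulA : kbilinear mulA.
Variable S : comAlgType k.
Variables (s1 : A -> A) (s2 : S -> S).
Hypotheses (hs1 : is_alg_aut mulA s1) (hs2 : is_alg_aut *%R s2).
Hypotheses (hs1m : forall a, iter m s1 a = a) (hs2m : forall s, iter m s2 s = s).
Variables (u v : S).
Hypotheses (hu : eigen s2 w u) (huv : u * v = 1).
Variables (T : lmodType k) (t : A -> S -> T).
Hypothesis ht : is_tensor_product t.
Variable mulT : T -> T -> T.
Hypothesis hmulT : kbilinear mulT.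
Hypothesis hmulTt : forall a b s s', mulT (t a s) (t b s') = t (mulA a b) (s * s').
Variable L : S -> T -> T.
Hypothesis hLdef : forall s a s', L s (t a s') = t a (s * s').
Hypothesis hLlin : forall s, klinear (L s).
Hypothesis hLcen : forall s x y, L s (mulT x y) = mulT (L s x) y /\ L s (mulT x y) = mulT x (L s y).
Variable d : T -> T.
Local Notation P := (tens_piece m w t s1 s2).
Hypothesis hd0 : forall x, P 0 x -> P 0 (d x).
Hypothesis hdlin : forall (c : k) x y, P 0 x -> P 0 y -> d (c *: x + y) = c *: d x + d y.
Hypothesis hdder : forall x y, P 0 x -> P 0 y -> d (mulT x y) = mulT (d x) y + mulT x (d y).

Let mpos := m_gt0 hw.

Lemma tl s : klinear (fun a => t a s). Proof. exact: ht.1.1. Qed.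
Lemma tr a : klinear (t a). Proof. exact: ht.1.2. Qed.
Lemma mTl y : klinear (fun x => mulT x y). Proof. exact: hmulT.1. Qed.
Lemma mTr x : klinear (mulT x). Proof. exact: hmulT.2. Qed.
Lemma mAl y : klinear (fun x => mulA x y). Proof. exact: hmulA.1. Qed.
Lemma mAr x : klinear (mulA x). Proof. exact: hmulA.2. Qed.

Lemma s2M x y : s2 (x * y) = s2 x * s2 y. Proof. exact: hs2.2.2. Qed.
Lemma s2_1 : s2 1 = 1.
Proof.
case: hs2 => _ [[g _ gK] _].
have : s2 1 * s2 (g 1) = s2 (g 1) by rewrite -s2M mul1r.
by rewrite gK mulr1.
Qed.

Lemma eigM_S e f x y : eigen s2 (w ^+ e) x -> eigen s2 (w ^+ f) y -> eigen s2 (w ^+ (e + f)) (x * y).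
Proof. by move=> hx hy; rewrite /eigen s2M hx hy -scalerAl -scalerAr scalerA exprD. Qed.

Lemma eigX e x i : eigen s2 (w ^+ e) x -> eigen s2 (w ^+ (i * e)) (x ^+ i).
Proof.
move=> hx; elim: i => [|i IH]; first by rewrite /eigen !expr0 s2_1 scale1r.
by rewrite exprS mulSn; apply: eigM_S.
Qed.

Lemma s1M x y : s1 (mulA x y) = mulA (s1 x) (s1 y). Proof. exact: hs1.2.2. Qed.

Lemma eigM_A e f x y : eigen s1 (w ^+ e) x -> eigen s1 (w ^+ f) y -> eigen s1 (w ^+ (e + f)) (mulA x y).
Proof.
move=> hx hy; rewrite /eigen s1M hx hy (klZ (mAl _)) (klZ (mAr _)) scalerA exprD.
by rewrite mulrC.
Qed.

Lemma hu1 : eigen s2 (w ^+ 1) u. Proof. by rewrite expr1. Qed.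

Lemma hv : eigen s2 (w ^+ (m - 1)) v.
Proof.
have w0 := w_neq0 hw.
have wm1 : w ^+ (m - 1) * w = 1 by rewrite -exprSr subn1 prednK // (wm hw).
have E : w *: (s2 v * u) = 1.
  by rewrite scalerAr -hu -s2M mulrC huv s2_1.
rewrite /eigen -[s2 v]mulr1 -huv mulrA.
have -> : s2 v * u = w ^+ (m - 1) *: 1.
  by rewrite -E scalerA wm1 scale1r.
by rewrite -scalerAl mul1r.
Qed.

Lemma uvX i : u ^+ i * v ^+ i = 1.
Proof. by rewrite -exprMn huv expr1n. Qed.


Definition Gen j y := exists (q : 'I_m) (a : A) (s : S),
  eigen s1 (w ^+ (j + (m - q))) a /\ eigen s2 (w ^+ q) s /\ y = t a s.

Lemma gen_piece j pa ps a s : eigen s1 (w ^+ pa) a -> eigen s2 (w ^+ ps) s ->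
  w ^+ j = w ^+ (pa + ps) -> P j (t a s).
Proof.
move=> ha hs hj; apply: span_gen.
have qm : (ps %% m < m)%N by rewrite ltn_pmod.
exists (Ordinal qm), a, s; split; last split => //=.
  have wq : w ^+ (ps %% m) != 0 by rewrite expf_neq0 // (w_neq0 hw).
  suff -> : w ^+ (j + (m - ps %% m)) = w ^+ pa by [].
  apply: (mulIf wq); rewrite -exprD (wmod hw) -exprD -hj.
  apply: (wE hw (l1 := 0) (l2 := 1)); move: qm; lia.
by rewrite (wmod hw).
Qed.

Lemma piece_map (f : T -> T) j j' : klinear f ->
  (forall pa ps a s, eigen s1 (w ^+ pa) a -> eigen s2 (w ^+ ps) s ->
     w ^+ j = w ^+ (pa + ps) -> P j' (f (t a s))) ->
  forall x, P j x -> P j' (f x).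
Proof.
move=> hf H; apply: map_span; first exact: kl_span.
move=> g [q [a [s [ha [hs ->]]]]]; apply: (H _ _ _ _ ha hs).
apply: (wE hw (l1 := 1) (l2 := 0)); move: (ltn_ord q); lia.
Qed.

Lemma Pcongr i j x : w ^+ i = w ^+ j -> P i x -> P j x.
Proof.
move=> hij; apply: (piece_map (f := id)) => // pa ps a s ha hs hi.
by apply: (gen_piece ha hs); rewrite -hij.
Qed.

Lemma Lsh e s j x : eigen s2 (w ^+ e) s -> P j x -> P (j + e) (L s x).
Proof.
move=> hs; apply: piece_map => // pa ps a s' ha hs' hj.
rewrite hLdef; apply: (gen_piece ha (eigM_S hs hs')).
by rewrite exprD hj -!exprD; congr (_ ^+ _); lia.
Qed.

Lemma L1 : L 1 =1 id.
Proof. by apply: (tens_ext ht) => // a s; rewrite hLdef mul1r. Qed.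

Lemma Lcomp s s' x : L s (L s' x) = L (s * s') x.
Proof.
have := @tens_ext _ _ _ _ _ ht (fun x => L s (L s' x)) (L (s * s')).
apply => //; first exact: kl_comp.
by move=> a s''; rewrite !hLdef mulrA.
Qed.

Lemma P_add j x y : P j x -> P j y -> P j (x + y). Proof. exact: spanD. Qed.
Lemma P_scale j a x : P j x -> P j (a *: x). Proof. exact: spanZ. Qed.
Lemma P_0 j : P j 0. Proof. exact: span0. Qed.

Definition c := L (u ^+ m).

Lemma cP0 x : P 0 x -> P 0 (c x).
Proof.
move=> hx; have := Lsh (eigX m hu1) hx; apply: Pcongr.
by apply: (wE hw (l1 := 0) (l2 := 1)); lia.
Qed.

Definition gam b := (m%:R)^-1 *: L (v ^+ (m - 1)) (d (c b) - c (d b)).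

Lemma gam_piece b : P 0 b -> P (0 + (m - 1) * (m - 1)) (gam b).
Proof.
move=> hb; apply: P_scale; apply: Lsh; first exact: eigX hv.
apply: P_add; first by apply: hd0; apply: cP0.
rewrite -scaleN1r; apply: P_scale; apply: cP0; exact: hd0.
Qed.

Lemma gam_lin a x y : P 0 x -> P 0 y -> gam (a *: x + y) = a *: gam x + gam y.
Proof.
move=> hx hy; rewrite /gam.
rewrite /c (hLlin _ a x y) (hdlin a (cP0 hx) (cP0 hy)) (hdlin a hx hy) (hLlin _ a (d x) (d y)).
rewrite opprD addrACA -scalerBr hLlin scalerDr !scalerA mulrC.
by [].
Qed.

Definition Gi (i : nat) b := L (u ^+ i) (d b) + i%:R *: L (u ^+ i.-1) (gam b).

Lemma Gi_lin i a x y : P 0 x -> P 0 y -> Gi i (a *: x + y) = a *: Gi i x + Gi i y.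
Proof.
move=> hx hy; rewrite /Gi (hdlin a hx hy) hLlin (gam_lin a hx hy) hLlin.
rewrite scalerDr !scalerA [_ * a]mulrC -!scalerA.
by rewrite scalerDr addrACA.
Qed.

Lemma Gi_piece i b : P 0 b -> P i (Gi i b).
Proof.
move=> hb; apply: P_add.
  have := Lsh (eigX i hu1) (hd0 hb); apply: Pcongr; by rewrite muln1.
case: i => [|i]; first by rewrite scale0r; exact: P_0.
apply: P_scale; have := Lsh (eigX i hu1) (gam_piece hb); apply: Pcongr.
apply: (wE hw (l1 := 1) (l2 := m.-1)); move: mpos; nia.
Qed.

Definition Fi i a s := Gi i (t a (v ^+ i * s)).

Lemma BP0 p q a s : eigen s1 (w ^+ p) a -> eigen s2 (w ^+ q) s ->
  P 0 (t a (v ^+ ((p + q) %% m) * s)).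
Proof.
move=> ha hs; apply: (gen_piece ha (eigM_S (eigX _ hv) hs)).
apply: (wE hw (l1 := (p + q) %/ m + (p + q) %% m) (l2 := 0)).
have := divn_eq (p + q) m; move: mpos; nia.
Qed.


Lemma hs1l : klinear s1. Proof. exact: hs1.1. Qed.
Lemma hs2l : klinear s2. Proof. exact: hs2.1. Qed.

Definition projA p := proj m w s1 p.
Definition projS p := proj m w s2 p.

Definition f a s := \sum_(p < m) \sum_(q < m) Fi ((p + q) %% m) (projA p a) (projS q s).

Lemma Fi_lin1 p q r x y s : eigen s1 (w ^+ p) x -> eigen s1 (w ^+ p) y -> eigen s2 (w ^+ q) s ->
  Fi ((p + q) %% m) (r *: x + y) s = r *: Fi ((p + q) %% m) x s + Fi ((p + q) %% m) y s.
Proof.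
move=> hx hy hs; rewrite /Fi (tl _ r x y); apply: Gi_lin; exact: BP0.
Qed.

Lemma Fi_lin2 p q r x s s' : eigen s1 (w ^+ p) x -> eigen s2 (w ^+ q) s -> eigen s2 (w ^+ q) s' ->
  Fi ((p + q) %% m) x (r *: s + s') = r *: Fi ((p + q) %% m) x s + Fi ((p + q) %% m) x s'.
Proof.
move=> hx hs hs'; rewrite /Fi mulrDr -scalerAr (tr _ r); apply: Gi_lin; exact: BP0.
Qed.

Lemma f_bil : kbilinear f.
Proof.
split => [s|a] r x y /=; rewrite /f scaler_sumr -big_split; apply: eq_bigr => p _;
  rewrite scaler_sumr -big_split; apply: eq_bigr => q _.
  rewrite /projA (@proj_lin _ m w _ _ hs1l p r x y); apply: Fi_lin1; [exact: (proj_eigen hw hs1l hs1m)|exact: (proj_eigen hw hs1l hs1m)|exact: (proj_eigen hw hs2l hs2m)].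
rewrite /projS (@proj_lin _ m w _ _ hs2l q r x y); apply: Fi_lin2; [exact: (proj_eigen hw hs1l hs1m)|exact: (proj_eigen hw hs2l hs2m)|exact: (proj_eigen hw hs2l hs2m)].
Qed.

Lemma Gi0 i : Gi i 0 = 0.
Proof.
have := Gi_lin i 1 (P_0 0) (P_0 0); rewrite scale1r addr0 scale1r => H.
by apply: (addrI (Gi i 0)); rewrite addr0 -H.
Qed.

Section WithD.
Variable D : T -> T.
Hypothesis hDlin : klinear D.
Hypothesis hDdef : forall a s, D (t a s) = f a s.

Lemma sum_single (F : 'I_m -> T) (p0 : 'I_m) : (forall p, p != p0 -> F p = 0) ->
  \sum_(p < m) F p = F p0.
Proof. by move=> H; rewrite (bigD1 p0) //= big1 ?addr0 // => p /H. Qed.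

Lemma D_gen pa ps a s : eigen s1 (w ^+ pa) a -> eigen s2 (w ^+ ps) s ->
  D (t a s) = Fi ((pa + ps) %% m) a s.
Proof.
move=> ha hs; rewrite hDdef /f.
rewrite (@sum_single _ (Ordinal (ltn_pmod pa mpos))) => [|p hp]; last first.
  rewrite /projA (proj_collapse hw hs1l ha (ltn_ord p)).
  have -> : (pa %% m == p)%N = false.
    by apply/negbTE; apply: contra hp => /eqP H; apply/eqP; apply: val_inj.
  by apply: big1 => q _; rewrite /Fi (kl0 (tl _)) Gi0.
rewrite /projA (proj_collapse hw hs1l ha (ltn_pmod pa mpos)) eqxx.
rewrite (@sum_single _ (Ordinal (ltn_pmod ps mpos))) => [|q hq]; last first.
  rewrite /projS (proj_collapse hw hs2l hs (ltn_ord q)).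
  have -> : (ps %% m == q)%N = false.
    by apply/negbTE; apply: contra hq => /eqP H; apply/eqP; apply: val_inj.
  by rewrite /Fi mulr0 (kl0 (tr _)) Gi0.
by rewrite /projS (proj_collapse hw hs2l hs (ltn_pmod ps mpos)) eqxx /= modnDm.
Qed.

Lemma D_piece j x : P j x -> P j (D x).
Proof.
apply: piece_map => // pa ps a s ha hs hj.
rewrite (D_gen ha hs) /Fi; have := @Gi_piece ((pa + ps) %% m) _ (BP0 ha hs); apply: Pcongr.
by rewrite (wmod hw) hj.
Qed.

Lemma D_agree x : P 0 x -> D x = d x.
Proof.
case=> n [cc [g [Pg ->]]].
rewrite (@lin_span _ _ (Gen 0) _ _ (kl_span hDlin) n cc g Pg) (@lin_span _ _ (Gen 0) _ d hdlin n cc g Pg).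
apply: eq_bigr => i _; congr (_ *: _).
case: (Pg i) => q [a [s [ha [hs ->]]]].
rewrite (D_gen ha hs) add0n subnK ?modnn; last exact: ltnW.
by rewrite /Fi /Gi expr0 mul1r scale0r addr0 L1.
Qed.

End WithD.

Lemma mulLL s s' x y : mulT (L s x) (L s' y) = L (s * s') (mulT x y).
Proof. by rewrite -(hLcen s x (L s' y)).1 -(hLcen s' x y).2 Lcomp. Qed.

Lemma klN (V W : lmodType k) (g : V -> W) : klinear g -> forall x, g (- x) = - g x.
Proof. by move=> hg x; rewrite -scaleN1r (klZ hg) scaleN1r. Qed.

Lemma klB (V W : lmodType k) (g : V -> W) : klinear g -> forall x y, g (x - y) = g x - g y.
Proof. by move=> hg x y; rewrite (klD hg) (klN hg). Qed.

Lemma gam_cen b b' : P 0 b -> P 0 b' ->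
  gam (mulT b b') = mulT (gam b) b' /\ gam (mulT b b') = mulT b (gam b').
Proof.
move=> hb hb'; split; rewrite /gam.
  have -> : d (c (mulT b b')) - c (d (mulT b b')) = mulT (d (c b) - c (d b)) b'.
    rewrite /c (hLcen _ b b').1 (hdder (cP0 hb) hb') (hdder hb hb') (klD (hLlin _)).
    rewrite -!(hLcen _ _ _).1 (klB (mTl _)) opprD addrACA.
    by rewrite subrr addr0 (hLcen _ (d b) b').1.
  by rewrite (hLcen _ _ _).1 (klZ (mTl _)).
have -> : d (c (mulT b b')) - c (d (mulT b b')) = mulT b (d (c b') - c (d b')).
  rewrite /c (hLcen _ b b').2 (hdder hb (cP0 hb')) (hdder hb hb') (klD (hLlin _)).
  rewrite -!(hLcen _ _ _).2 (klB (mTr _)) opprD addrACA.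
  by rewrite subrr add0r (hLcen _ b (d b')).2.
by rewrite (hLcen _ _ _).2 (klZ (mTr b)).
Qed.

Lemma dcz z : d (c z) = c (d z) + m%:R *: L (u ^+ (m - 1)) (gam z).
Proof.
rewrite /gam (klZ (hLlin _)) scalerA mulfV ?(mR_neq0 hw) // scale1r Lcomp uvX L1 /=.
by rewrite addrC subrK.
Qed.

Lemma gam_c b b' : P 0 b -> P 0 b' -> gam (c (mulT b b')) = c (gam (mulT b b')).
Proof.
move=> hb hb'; rewrite {1}/c (hLcen _ b b').1 (gam_cen (cP0 hb) hb').2.
by rewrite /c -(hLcen _ _ _).1 -(gam_cen hb hb').2.
Qed.

Lemma coefL (F : nat -> T) i j :
  i%:R *: F (i.-1 + j)%N + j%:R *: F (i + j.-1)%N = (i + j)%:R *: F (i + j).-1.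
Proof.
case: i => [|i]; first by rewrite scale0r add0r.
case: j => [|j]; first by rewrite scale0r addr0 !addn0.
have -> : (i.+1.-1 + j.+1 = (i.+1 + j.+1).-1)%N by lia.
have -> : (i.+1 + j.+1.-1 = (i.+1 + j.+1).-1)%N by lia.
by rewrite -scalerDl -natrD.
Qed.

Lemma core i j a s a' s' : (i < m)%N -> (j < m)%N ->
  P 0 (t a (v ^+ i * s)) -> P 0 (t a' (v ^+ j * s')) ->
  Fi ((i + j) %% m) (mulA a a') (s * s') = mulT (Fi i a s) (t a' s') + mulT (t a s) (Fi j a' s').
Proof.
move=> im jm hb hb'.
set b := t a (v ^+ i * s); set b' := t a' (v ^+ j * s').
have ta : t a s = L (u ^+ i) b by rewrite /b hLdef mulrA uvX mul1r.
have ta' : t a' s' = L (u ^+ j) b' by rewrite /b' hLdef mulrA uvX mul1r.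
set z := mulT b b'.
have hz : z = t (mulA a a') (v ^+ (i + j) * (s * s')) by rewrite /z hmulTt mulrACA -exprD.
have -> : mulT (Fi i a s) (t a' s') + mulT (t a s) (Fi j a' s') =
    L (u ^+ (i + j)) (d z) + (i + j)%:R *: L (u ^+ (i + j).-1) (gam z).
  rewrite ta ta' /Fi -/b -/b' /Gi (klD (mTl _)) (klD (mTr _)) (klZ (mTl _)) (klZ (mTr _)) !mulLL.
  rewrite -(gam_cen hb hb').1 -(gam_cen hb hb').2 -!exprD -/z /z hdder // (klD (hLlin _)) -/z.
  by rewrite addrACA (coefL (fun n => L (u ^+ n) (gam z))).
case: (ltnP (i + j)%N m) => hij.
  by rewrite (modn_small hij) /Fi -hz.
set r := (i + j - m)%N.
have hr : ((i + j) %% m = r)%N.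
  have -> : (i + j = r + m)%N by rewrite /r; lia.
  rewrite modnDr modn_small //; rewrite /r; lia.
have hcz : t (mulA a a') (v ^+ r * (s * s')) = c z.
  rewrite hz /c hLdef; congr (t _ _); rewrite [RHS]mulrA; congr (_ * _).
  have -> : (i + j = r + m)%N by rewrite /r; lia.
  by rewrite exprD mulrCA uvX mulr1 ?eqxx.
rewrite hr /Fi hcz /Gi dcz (gam_c hb hb') -/z /c (klD (hLlin _)) (klZ (hLlin _)) !Lcomp -!exprD.
have -> : (r + m = i + j)%N by rewrite /r; lia.
have -> : (r + (m - 1) = (i + j).-1)%N by rewrite /r; lia.
rewrite -addrA; congr (_ + _).
case: (posnP r) => r0.
  rewrite r0 scale0r addr0; congr (_ *: _); congr (_%:R); rewrite /r in r0; lia.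
have -> : (r.-1 + m = (i + j).-1)%N by rewrite /r in r0 *; lia.
rewrite -scalerDl -natrD; congr (_%:R *: _); rewrite /r in r0 *; lia.
Qed.

Lemma t_sum_l n (F : 'I_n -> A) s : t (\sum_(i < n) F i) s = \sum_(i < n) t (F i) s.
Proof. exact: (kl_sum (tl s)). Qed.
Lemma t_sum_r a n (F : 'I_n -> S) : t a (\sum_(i < n) F i) = \sum_(i < n) t a (F i).
Proof. exact: (kl_sum (tr a)). Qed.

Lemma ext_eig (g1 g2 : T -> T) : klinear g1 -> klinear g2 ->
  (forall p q a s, eigen s1 (w ^+ p) a -> eigen s2 (w ^+ q) s -> g1 (t a s) = g2 (t a s)) ->
  g1 =1 g2.
Proof.
move=> h1 h2 H; apply: (tens_ext ht h1 h2) => a s.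
rewrite -(proj_sum hw s1 a) -(proj_sum hw s2 s).
have E : t (\sum_(p < m) proj m w s1 p a) (\sum_(q < m) proj m w s2 q s) =
   \sum_(p < m) \sum_(q < m) t (proj m w s1 p a) (proj m w s2 q s).
  by rewrite t_sum_l; apply: eq_bigr => p _; rewrite t_sum_r.
rewrite E (kl_sum h1) (kl_sum h2); apply: eq_bigr => p _.
rewrite (kl_sum h1) (kl_sum h2); apply: eq_bigr => q _.
apply: H; [exact: (proj_eigen hw hs1l hs1m) | exact: (proj_eigen hw hs2l hs2m)].
Qed.

Section WithD2.
Variable D : T -> T.
Hypothesis hDlin : klinear D.
Hypothesis hDdef : forall a s, D (t a s) = f a s.

Lemma D_der_gen p q p' q' a s a' s' :
  eigen s1 (w ^+ p) a -> eigen s2 (w ^+ q) s -> eigen s1 (w ^+ p') a' -> eigen s2 (w ^+ q') s' ->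
  D (mulT (t a s) (t a' s')) = mulT (D (t a s)) (t a' s') + mulT (t a s) (D (t a' s')).
Proof.
move=> ha hs ha' hs'.
rewrite hmulTt (D_gen hDdef (eigM_A ha ha') (eigM_S hs hs')).
rewrite (D_gen hDdef ha hs) (D_gen hDdef ha' hs').
have -> : ((p + p' + (q + q')) %% m = ((p + q) %% m + (p' + q') %% m) %% m)%N.
  by rewrite modnDm; congr (_ %% _)%N; lia.
apply: core; [exact: ltn_pmod | exact: ltn_pmod | exact: BP0 | exact: BP0].
Qed.

Lemma D_der x y : D (mulT x y) = mulT (D x) y + mulT x (D y).
Proof.
move: x; apply: (ext_eig (g1 := fun x => D (mulT x y)) (g2 := fun x => mulT (D x) y + mulT x (D y))).
- exact: kl_comp hDlin (mTl y).
- exact: kl_add (kl_comp (mTl y) hDlin) (mTl (D y)).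
move=> p q a s ha hs /=.
move: y; apply: (ext_eig (g1 := fun y => D (mulT (t a s) y))
                         (g2 := fun y => mulT (D (t a s)) y + mulT (t a s) (D y))).
- exact: kl_comp hDlin (mTr _).
- exact: kl_add (mTr _) (kl_comp (mTr _) hDlin).
move=> p' q' a' s' ha' hs' /=; exact: (D_der_gen ha hs ha' hs').
Qed.
End WithD2.

Lemma main_ex : exists D : T -> T, is_derivation mulT D /\
  (forall (j : 'I_m) x, P j x -> P j (D x)) /\ (forall x, P 0 x -> D x = d x).
Proof.
case: (tens_lift ht f_bil) => D [hDlin hDdef].
exists D; split; first by split => //; exact: D_der.
split => [j x|x]; [exact: D_piece | exact: D_agree].
Qed.

End Main.

End Aux.

Theorem lemma4p8
  (k : fieldType) (m : nat) (w : k) (hw : m.-primitive_root w)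
  (A : lmodType k) (mulA : A -> A -> A) (hmulA : kbilinear mulA)
  (hperf : perfect mulA)
  (S : comAlgType k)
  (s1 : A -> A) (s2 : S -> S)
  (hs1 : is_alg_aut mulA s1) (hs2 : is_alg_aut *%R s2)
  (hs1m : forall a, iter m s1 a = a) (hs2m : forall s, iter m s2 s = s)
  (u : S) (hu : eigen s2 w u) (hu_inv : exists v : S, u * v = 1)
  (* A (x) S as a tensor product, with its algebra product *)
  (T : lmodType k) (t : A -> S -> T) (ht : is_tensor_product t)
  (mulT : T -> T -> T) (hmulT : kbilinear mulT)
  (hmulTt : forall a b s s', mulT (t a s) (t b s') = t (mulA a b) (s * s'))
  (* C(A), realized as a k-vector space C embedded in maps A -> A *)
  (C : lmodType k) (iota : C -> A -> A)
  (hiota_lin : forall (c : k) (x y : C) (a : A),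
      iota (c *: x + y) a = c *: iota x a + iota y a)
  (hiota_inj : forall x y, iota x =1 iota y -> x = y)
  (hiota_in : forall x, in_centroid mulA (iota x))
  (hiota_onto : forall g, in_centroid mulA g -> exists x, iota x =1 g)
  (* C(A) (x) S and psi : gamma (x) s |-> gamma (x) L_s *)
  (U : lmodType k) (tU : C -> S -> U) (htU : is_tensor_product tU)
  (psi : U -> T -> T)
  (hpsi_lin : forall (c : k) (x y : U) (z : T),
      psi (c *: x + y) z = c *: psi x z + psi y z)
  (hpsi_lin2 : forall x, klinear (psi x))
  (hpsi_def : forall g s a s', psi (tU g s) (t a s') = t (iota g a) (s * s'))
  (* psi is an isomorphism onto C(A (x) S) *)
  (hpsi_in : forall x, in_centroid mulT (psi x))
  (hpsi_inj : forall x y, psi x =1 psi y -> x = y)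
  (hpsi_onto : forall g, in_centroid mulT g -> exists x, psi x =1 g) :
  (* every derivation d of the fixed-point subalgebra (A (x) S)_0 ... *)
  forall d : T -> T,
    (forall x, tens_piece m w t s1 s2 0 x -> tens_piece m w t s1 s2 0 (d x)) ->
    (forall (c : k) x y, tens_piece m w t s1 s2 0 x -> tens_piece m w t s1 s2 0 y ->
        d (c *: x + y) = c *: d x + d y) ->
    (forall x y, tens_piece m w t s1 s2 0 x -> tens_piece m w t s1 s2 0 y ->
        d (mulT x y) = mulT (d x) y + mulT x (d y)) ->
  (* ... is the restriction of a graded-piece-preserving derivation of A (x) S *)
  exists D : T -> T,
    is_derivation mulT D /\
    (forall (j : 'I_m) x, tens_piece m w t s1 s2 j x -> tens_piece m w t s1 s2 j (D x)) /\
    (forall x, tens_piece m w t s1 s2 0 x -> D x = d x).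

Proof.
move=> d hd0 hdlin hdder.
case: hu_inv => v huv.
have hid : in_centroid mulA id by split => // x y.
case: (hiota_onto id hid) => c1 hc1.
pose L := fun s => psi (tU c1 s).
apply: (@Aux.main_ex k m w hw A mulA hmulA S s1 s2 hs1 hs2 hs1m hs2m u v hu huv
   T t ht mulT hmulT hmulTt L _ _ _ d hd0 hdlin hdder).
- by move=> s a s'; rewrite /L hpsi_def hc1.
- by move=> s; exact: hpsi_lin2.
- by move=> s x y; exact: (hpsi_in _).2 x y.
Qed.
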